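(* Let $q>1$. There is no radially symmetric $u\in C^{4}(\mathbb{R}^{2})$, $u>0$, solving $\Delta^{2}u+u^{-q}=0$ in $\mathbb{R}^{2}$. *)

(* Defs.v *)
From Stdlib Require Import Reals.
From Coquelicot Require Import Coquelicot.
Open Scope R_scope.

Definition dx (f : R -> R -> R) : R -> R -> R :=
  fun x y => Derive (fun t => f t y) x.
Definition dy (f : R -> R -> R) : R -> R -> R :=
  fun x y => Derive (fun t => f x t) y.

Definition cont2 (f : R -> R -> R) : Prop :=
  forall p : R * R, continuous (fun q : R * R => f (fst q) (snd q)) p.

Fixpoint Ck (k : nat) (f : R -> R -> R) : Prop :=
  match k with
  | O => cont2 f
  | S k' => cont2 f
            /\ (forall x y, ex_derive (fun t => f t y) x)
            /\ (forall x y, ex_derive (fun t => f x t) y)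
            /\ Ck k' (dx f) /\ Ck k' (dy f)
  end.

Definition laplacian (f : R -> R -> R) : R -> R -> R :=
  fun x y => dx (dx f) x y + dy (dy f) x y.

Definition bilaplacian (f : R -> R -> R) : R -> R -> R :=
  laplacian (laplacian f).

Definition radial (f : R -> R -> R) : Prop :=
  forall x y x' y', x ^ 2 + y ^ 2 = x' ^ 2 + y' ^ 2 -> f x y = f x' y'.

(* Main.v *)
Require Import Defs.
From Stdlib Require Import Reals Lra.
From Coquelicot Require Import Coquelicot.
Open Scope R_scope.

Lemma mono_gen (h dh : R -> R) a b : a < b ->
  (forall x, a <= x <= b -> is_derive h x (dh x)) ->
  exists c, a <= c <= b /\ h b - h a = dh c * (b - a).
Proof.
  intros Hab Hd.
  destruct (MVT_gen h a b dh) as [c [Hc E]].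
  - intros x Hx. rewrite Rmin_left in Hx by lra. rewrite Rmax_right in Hx by lra.
    apply Hd; lra.
  - intros x Hx. rewrite Rmin_left in Hx by lra. rewrite Rmax_right in Hx by lra.
    apply derivable_continuous_pt. exists (dh x).
    apply is_derive_Reals; apply Hd; lra.
  - exists c. rewrite Rmin_left in Hc by lra. rewrite Rmax_right in Hc by lra. split; auto.
Qed.

Lemma decr (h dh : R -> R) a b : a <= b ->
  (forall x, a <= x <= b -> is_derive h x (dh x)) ->
  (forall x, a <= x <= b -> dh x <= 0) -> h b <= h a.
Proof.
  intros Hab Hd Hn. destruct (Req_dec a b) as [->|Hne]; [lra|].
  destruct (mono_gen h dh a b) as [c [Hc E]]; try lra; auto.
  assert (dh c <= 0) by (apply Hn; lra).
  assert (dh c * (b - a) <= 0) by (apply Rmult_le_0_r; lra). lra.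
Qed.

Lemma sdecr (h dh : R -> R) a b : a < b ->
  (forall x, a <= x <= b -> is_derive h x (dh x)) ->
  (forall x, a <= x <= b -> dh x < 0) -> h b < h a.
Proof.
  intros Hab Hd Hn.
  destruct (mono_gen h dh a b) as [c [Hc E]]; try lra; auto.
  assert (dh c < 0) by (apply Hn; lra).
  assert (dh c * (b - a) < 0) by (apply Rmult_neg_pos; lra). lra.
Qed.

Lemma is_derive_eq (f : R -> R) (x l l' : R) : is_derive f x l -> @eq R l l' -> is_derive f x l'.
Proof. intros H E. rewrite <- E. exact H. Qed.

Lemma sq_pos x c : 0 < x^2 + c -> 0 < sqrt (x^2+c).
Proof. intros; apply sqrt_lt_R0; auto. Qed.

Lemma sq_sq x c : 0 < x^2 + c -> sqrt (x^2+c) ^ 2 = x^2 + c.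
Proof. intros; rewrite <- Rsqr_pow2; apply Rsqr_sqrt; lra. Qed.

Lemma D0 x c : 0 < x^2 + c ->
  is_derive (fun t => sqrt (t^2 + c)) x (x / sqrt (x^2+c)).
Proof.
  intros H. assert (Hs := sq_pos x c H).
  eapply is_derive_eq. apply (is_derive_sqrt (fun t => t^2+c)). auto_derive. auto. reflexivity. exact H.
  field. lra.
Qed.

Lemma D1 (h : R -> R) (h1r x c : R) : 0 < x^2 + c ->
  is_derive h (sqrt (x^2+c)) h1r ->
  is_derive (fun t => h (sqrt (t^2 + c))) x (h1r * x / sqrt (x^2+c)).
Proof.
  intros H Hh. assert (Hs := sq_pos x c H).
  eapply is_derive_eq. apply (is_derive_comp h (fun t => sqrt (t^2+c))). exact Hh.
  apply D0; exact H. set (s := sqrt (x^2+c)) in *. unfold scal; simpl; unfold mult; simpl. field. lra.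
Qed.


Lemma D3 x c : 0 < x^2 + c ->
  is_derive (fun t => t / sqrt (t^2+c)) x (c / sqrt (x^2+c) ^ 3).
Proof.
  intros H. assert (Hs := sq_pos x c H). assert (Hq := sq_sq x c H).
  evar (l : R).
  assert (E : is_derive (fun t => t / sqrt (t^2+c)) x l).
  { auto_derive. replace (x*(x*1)) with (x^2) by ring. repeat split; lra.
    unfold l; reflexivity. }
  eapply is_derive_eq. exact E. unfold l.
  replace (x*(x*1)) with (x^2) by ring. set (s := sqrt (x^2+c)) in *.
  replace c with (s^2 - x^2) by lra. field. lra.
Qed.

Lemma D2 (h1 : R -> R) (h2r x c : R) : 0 < x^2 + c ->
  is_derive h1 (sqrt (x^2+c)) h2r ->
  is_derive (fun t => h1 (sqrt (t^2 + c)) * t / sqrt (t^2+c)) x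
    (h2r * x / sqrt (x^2+c) * x / sqrt (x^2+c) + h1 (sqrt (x^2+c)) * c / sqrt (x^2+c) ^ 3).
Proof.
  intros H Hh. assert (Hs := sq_pos x c H).
  assert (E := D3 x c H).
  assert (E1 := D1 h1 h2r x c H Hh).
  eapply is_derive_eq.
  eapply is_derive_ext. 2: apply (is_derive_mult _ _ x _ _ E1 E).
  { intros t; simpl; unfold mult; simpl. unfold Rdiv. ring. }
  { intros; apply Rmult_comm. }
  set (s := sqrt (x^2+c)) in *. unfold plus, mult; simpl. field. lra.
Qed.

Lemma sqrt_sq2 z : 0 <= z -> sqrt z ^ 2 = z.
Proof. intros; rewrite <- Rsqr_pow2; apply Rsqr_sqrt; lra. Qed.

Lemma radial_rep (v : R -> R -> R) : radial v ->
  forall a b, v a b = v (sqrt (a^2+b^2)) 0.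
Proof.
  intros Hr a b. apply Hr. rewrite sqrt_sq2 by nra. ring.
Qed.

Lemma loc_pos x y : 0 < x^2 + y^2 ->
  locally x (fun t => 0 < t^2 + y^2).
Proof.
  intros H. assert (Hs := sq_pos x (y^2) H). assert (Hq := sq_sq x (y^2) H).
  exists (mkposreal _ Hs). intros t Ht. change (Rabs (t - x) < sqrt (x^2+y^2)) in Ht.
  set (r := sqrt (x^2+y^2)) in *.
  destruct (Req_dec y 0) as [->|Hy]; [|nra].
  destruct (Req_dec t 0) as [->|Ht0]; [|nra].
  exfalso. rewrite Rminus_0_l, Rabs_Ropp in Ht.
  assert (x^2 < r^2). { rewrite <- (pow2_abs x). assert (0 <= Rabs x) by apply Rabs_pos. nra. }
  nra.
Qed.

Lemma L (v : R -> R -> R) : radial v ->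
  (forall s, ex_derive (fun t => v t 0) s) ->
  (forall s, ex_derive (fun t => dx v t 0) s) ->
  forall x y, 0 < x^2 + y^2 ->
  laplacian v x y = dx (dx v) (sqrt (x^2+y^2)) 0
                    + dx v (sqrt (x^2+y^2)) 0 / sqrt (x^2+y^2).
Proof.
  intros Hr Hd1 Hd2.
  set (h := fun s => v s 0). set (h1 := fun s => dx v s 0).
  set (h2 := fun s => dx (dx v) s 0).
  assert (Hrep : forall a b, v a b = h (sqrt (a^2+b^2))) by (intros; apply radial_rep; auto).
  assert (Hh : forall s, is_derive h s (h1 s)).
  { intros s. apply Derive_correct. apply Hd1. }
  assert (Hh1 : forall s, is_derive h1 s (h2 s)).
  { intros s. apply Derive_correct. apply Hd2. }
  assert (Fx : forall a b, 0 < a^2+b^2 -> dx v a b = h1 (sqrt (a^2+b^2)) * a / sqrt (a^2+b^2)).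
  { intros a b Hab. unfold dx at 1. apply is_derive_unique.
    eapply is_derive_ext. 2: apply (D1 h _ a (b^2) Hab (Hh _)).
    intros t. simpl. symmetry; apply Hrep. }
  assert (Fy : forall a b, 0 < a^2+b^2 -> dy v a b = h1 (sqrt (b^2+a^2)) * b / sqrt (b^2+a^2)).
  { intros a b Hab. unfold dy at 1. apply is_derive_unique.
    assert (Hba : 0 < b^2 + a^2) by lra.
    eapply is_derive_ext. 2: apply (D1 h _ b (a^2) Hba (Hh _)).
    intros t. simpl. rewrite Hrep. f_equal. f_equal. ring. }
  intros x y Hxy.
  assert (Hyx : 0 < y^2 + x^2) by lra.
  unfold laplacian.
  assert (E1 : dx (dx v) x y = h2 (sqrt (x^2+y^2)) * x / sqrt (x^2+y^2) * x / sqrt (x^2+y^2)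
       + h1 (sqrt (x^2+y^2)) * y^2 / sqrt (x^2+y^2) ^ 3).
  { unfold dx at 1. apply is_derive_unique.
    eapply is_derive_ext_loc. 2: apply (D2 h1 _ x (y^2) Hxy (Hh1 _)).
    generalize (loc_pos x y Hxy). apply filter_imp. intros t Ht. simpl.
    symmetry; apply Fx; auto. }
  assert (E2 : dy (dy v) x y = h2 (sqrt (y^2+x^2)) * y / sqrt (y^2+x^2) * y / sqrt (y^2+x^2)
       + h1 (sqrt (y^2+x^2)) * x^2 / sqrt (y^2+x^2) ^ 3).
  { unfold dy at 1. apply is_derive_unique.
    eapply is_derive_ext_loc. 2: apply (D2 h1 _ y (x^2) Hyx (Hh1 _)).
    generalize (loc_pos y x Hyx). apply filter_imp. intros t Ht. simpl.
    symmetry. rewrite Fy by lra. reflexivity. }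
  rewrite E1, E2. replace (y^2+x^2) with (x^2+y^2) by ring.
  fold (h2 (sqrt (x^2+y^2))). fold (h1 (sqrt (x^2+y^2))).
  assert (Hs := sq_pos x (y^2) Hxy). assert (Hq := sq_sq x (y^2) Hxy).
  set (r := sqrt (x^2+y^2)) in *. field_simplify; [|lra..].
  replace (h2 r * x^2*r + h2 r*r*y^2 + x^2*h1 r + h1 r*y^2) with ((h2 r * r + h1 r) * r^2) by (rewrite Hq; ring).
  field. lra.
Qed.

Lemma Ck_S k f : Ck (S k) f ->
  (forall x y, ex_derive (fun t => f t y) x) /\ (forall x y, ex_derive (fun t => f x t) y)
  /\ Ck k (dx f) /\ Ck k (dy f).
Proof. intros [_ H]; exact H. Qed.

Lemma sqrt_x0 x : 0 < x -> sqrt (x^2 + 0^2) = x.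
Proof. intros. replace (x^2+0^2) with (x^2) by ring. apply sqrt_pow2; lra. Qed.

Lemma Rpower_pos a b : 0 < Rpower a b.
Proof. unfold Rpower; apply exp_pos. Qed.

Lemma cont0 (p : R -> R) : (forall x, ex_derive p x) -> forall eps, 0 < eps ->
  exists alp, 0 < alp /\ forall t, t <> 0 -> Rabs t < alp -> Rabs (p t - p 0) < eps.
Proof.
  intros Hd eps He.
  assert (Hc : continuity_pt p 0).
  { apply derivable_continuous_pt. exists (Derive p 0). apply is_derive_Reals. apply Derive_correct. apply Hd. }
  destruct (Hc eps He) as [alp [Ha Hal]]. exists alp. split; auto.
  intros t Ht Hta. apply (Hal t). split. split; [exact I|auto]. simpl. unfold R_dist. rewrite Rminus_0_r. auto.
Qed.

Lemma is_derive_id1 (x : R) : is_derive (fun t : R => t) x 1.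
Proof. auto_derive; auto. Qed.

Theorem mainTheorem19 (q : R) (hq : 1 < q) :
  ~ (exists u : R -> R -> R,
       Ck 4 u /\ radial u /\ (forall x y, 0 < u x y) /\
       (forall x y, bilaplacian u x y + Rpower (u x y) (- q) = 0)).
Proof.
  intros [u [HC [Hrad [Hpos Heq]]]].
  destruct (Ck_S _ _ HC) as [Eu_x [_ [C3x C3y]]].
  destruct (Ck_S _ _ C3x) as [Eux_x [_ [C2xx _]]].
  destruct (Ck_S _ _ C3y) as [_ [_ [_ C2yy]]].
  destruct (Ck_S _ _ C2xx) as [Euxx_x [_ [C1xxx _]]].
  destruct (Ck_S _ _ C2yy) as [Euyy_x [_ [C1yyx _]]].
  destruct (Ck_S _ _ C1xxx) as [Euxxx_x _].
  destruct (Ck_S _ _ C1yyx) as [Euyyx_x _].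
  assert (Lu := L u Hrad (fun s => Eu_x s 0) (fun s => Eux_x s 0)).
  set (w := laplacian u).
  assert (Hradw : radial w).
  { intros x y x' y' E.
    destruct (Req_dec (x^2+y^2) 0) as [Z|Z].
    - assert (x = 0) by nra. assert (y = 0) by nra.
      assert (x' = 0) by nra. assert (y' = 0) by nra. subst. reflexivity.
    - assert (0 < x^2+y^2) by (assert (0 <= x^2+y^2) by nra; lra).
      unfold w. rewrite (Lu x y), (Lu x' y') by lra. rewrite E. reflexivity. }
  assert (Ew : forall s, ex_derive (fun t => w t 0) s).
  { intros s. unfold w, laplacian. apply (ex_derive_plus (fun t => dx (dx u) t 0) (fun t => dy (dy u) t 0)); auto. }
  assert (Dw : forall t y, dx w t y = dx (dx (dx u)) t y + dx (dy (dy u)) t y).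
  { intros t y. change (Derive (fun a => dx (dx u) a y + dy (dy u) a y) t = dx (dx (dx u)) t y + dx (dy (dy u)) t y).
    rewrite Derive_plus; auto. }
  assert (Ew1 : forall s, ex_derive (fun t => dx w t 0) s).
  { intros s. eapply ex_derive_ext. intros t. symmetry. apply Dw. apply (ex_derive_plus (fun t => dx (dx (dx u)) t 0) (fun t => dx (dy (dy u)) t 0)); auto. }
  assert (Lw := L w Hradw Ew Ew1).
  set (g := fun s => w s 0). set (g1 := fun s => dx w s 0). set (g2 := fun s => dx (dx w) s 0).
  assert (Hg : forall s, is_derive g s (g1 s)) by (intros; apply Derive_correct; apply Ew).
  assert (Hg1 : forall s, is_derive g1 s (g2 s)) by (intros; apply Derive_correct; apply Ew1).
  assert (Neg : forall x, 0 < x -> g2 x + g1 x / x < 0).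
  { intros x Hx. specialize (Heq x 0). unfold bilaplacian in Heq. fold w in Heq.
    rewrite Lw in Heq by nra. rewrite sqrt_x0 in Heq by lra.
    generalize (Rpower_pos (u x 0) (-q)). unfold g1, g2. lra. }
  set (psi := fun x => x * g1 x).
  assert (Hpsi : forall x, is_derive psi x (g1 x + x * g2 x)).
  { intros x. eapply is_derive_eq.
    apply (is_derive_mult (fun t => t) g1 x 1 (g2 x)). apply is_derive_id1. apply Hg1.
    intros; apply Rmult_comm. unfold plus, mult; simpl. ring. }
  assert (Dpsi : forall x, 0 < x -> g1 x + x * g2 x < 0).
  { intros x Hx. specialize (Neg x Hx).
    replace (g1 x + x * g2 x) with (x * (g2 x + g1 x / x)) by (field; lra). nra. }
  assert (Sdec : forall a b, 0 < a < b -> psi b < psi a).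
  { intros a b Hab. apply (sdecr psi (fun x => g1 x + x * g2 x)); try lra.
    intros; apply Hpsi. intros; apply Dpsi; lra. }
  assert (P1 : psi 1 < 0).
  { assert (Hlt := Sdec (/2) 1 ltac:(lra)).
    destruct (cont0 psi (fun x => ex_intro _ _ (Hpsi x)) (psi (/2) - psi 1) ltac:(lra)) as [alp [Ha Hal]].
    set (t := Rmin (alp/2) (/4)).
    assert (0 < t) by (unfold t; apply Rmin_glb_lt; lra).
    assert (t <= /4) by (unfold t; apply Rmin_r).
    assert (t <= alp/2) by (unfold t; apply Rmin_l).
    specialize (Hal t ltac:(lra) ltac:(rewrite Rabs_pos_eq; lra)).
    assert (psi 0 = 0) by (unfold psi; ring). rewrite H2 in Hal.
    assert (Hs := Sdec t (/2) ltac:(lra)).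
    assert (psi t < psi (/2) - psi 1) by (apply Rabs_lt_between in Hal; lra). lra. }
  set (c := - psi 1).
  assert (Hc : 0 < c) by (unfold c; lra).
  assert (G1 : forall x, 1 <= x -> g1 x <= - c / x).
  { intros x Hx. assert (psi x <= psi 1).
    { apply (decr psi (fun x => g1 x + x * g2 x)); [lra | intros; apply Hpsi | intros; left; apply Dpsi; lra]. }
    unfold psi in H. unfold c, psi. apply (Rmult_le_reg_l x). lra.
    field_simplify; lra. }
  assert (Glog : forall x, 1 <= x -> g x <= g 1 - c * ln x).
  { intros x Hx. set (k := fun x => g x + c * ln x).
    assert (k x <= k 1).
    { apply (decr k (fun x => g1 x + c * / x)); auto.
      - intros y Hy. unfold k. apply (is_derive_plus g (fun t => c * ln t)). apply Hg.
        eapply is_derive_eq. apply is_derive_scal. apply is_derive_ln. lra. reflexivity.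
      - intros y Hy. assert (G := G1 y ltac:(lra)). unfold Rdiv in G. lra. }
    unfold k in H. rewrite ln_1 in H. lra. }
  set (X := exp (Rmax 0 ((g 1 + 1) / c))).
  assert (HX1 : 1 <= X).
  { unfold X. apply Rle_trans with (exp 0); [rewrite exp_0; lra|]. destruct (Rmax_l 0 ((g 1+1)/c)) as [Hl|He]; [left; apply exp_increasing; auto | rewrite <- He; lra]. }
  assert (GX : forall x, X <= x -> g x <= -1).
  { intros x Hx. assert (Hl : ln X <= ln x) by (apply ln_le; lra).
    unfold X in Hl at 1. rewrite ln_exp in Hl.
    assert ((g 1 + 1)/c <= ln x) by (eapply Rle_trans; [apply Rmax_r|exact Hl]).
    assert (c * ((g 1 + 1)/c) <= c * ln x) by (apply Rmult_le_compat_l; lra).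
    replace (c * ((g 1 + 1)/c)) with (g 1 + 1) in H0 by (field; lra).
    specialize (Glog x ltac:(lra)). lra. }
  set (f := fun s => u s 0). set (f1 := fun s => dx u s 0). set (f2 := fun s => dx (dx u) s 0).
  assert (Hf : forall s, is_derive f s (f1 s)) by (intros; apply Derive_correct; apply Eu_x).
  assert (Hf1 : forall s, is_derive f1 s (f2 s)) by (intros; apply Derive_correct; apply Eux_x).
  assert (Gf : forall x, 0 < x -> g x = f2 x + f1 x / x).
  { intros x Hx. unfold g. rewrite Lu by nra. rewrite sqrt_x0 by lra. reflexivity. }
  set (k2 := fun x => x * f1 x + x^2/2).
  assert (Hk2 : forall x, is_derive k2 x (f1 x + x * f2 x + x)).
  { intros x. unfold k2. eapply is_derive_eq.
    apply (is_derive_plus (fun x => x * f1 x) (fun x => x^2/2)).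
    apply (is_derive_mult (fun t => t) f1 x 1 (f2 x)). apply is_derive_id1. apply Hf1.
    intros; apply Rmult_comm.
    assert (is_derive (fun x : R => x^2/2) x x) by (auto_derive; try field; auto).
    exact H. unfold plus, mult; simpl. ring. }
  set (A := k2 X).
  assert (K2 : forall x, X <= x -> k2 x <= A).
  { intros x Hx. apply (decr k2 (fun x => f1 x + x * f2 x + x)); auto.
    intros y Hy. assert (G := GX y ltac:(lra)). rewrite Gf in G by lra.
    replace (f1 y + y * f2 y + y) with (y * (f2 y + f1 y / y + 1)) by (field; lra). nra. }
  set (X1 := Rmax X (Rmax 1 (2 * (Rabs A + 1)))).
  assert (HX1a : X <= X1) by apply Rmax_l.
  assert (HX1b : 1 <= X1) by (eapply Rle_trans; [|apply Rmax_r]; apply Rmax_l).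
  assert (HX1c : 2 * (Rabs A + 1) <= X1) by (eapply Rle_trans; [|apply Rmax_r]; apply Rmax_r).
  assert (F1 : forall x, X1 <= x -> f1 x <= -1).
  { intros x Hx. assert (K := K2 x ltac:(lra)). unfold k2 in K.
    assert (A <= Rabs A) by apply Rle_abs.
    assert (0 <= Rabs A) by apply Rabs_pos.
    assert (x * f1 x <= - x) by nra.
    apply (Rmult_le_reg_l x). lra. lra. }
  set (xs := X1 + Rabs (f X1) + 1).
  assert (Hxs : X1 <= xs) by (unfold xs; generalize (Rabs_pos (f X1)); lra).
  assert (M : f xs + xs <= f X1 + X1).
  { apply (decr (fun x => f x + x) (fun x => f1 x + 1)); auto.
    intros y Hy. apply (is_derive_plus f (fun x => x)). apply Hf. apply is_derive_id1.
    intros y Hy. assert (F := F1 y ltac:(lra)). lra. }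
  assert (f X1 <= Rabs (f X1)) by apply Rle_abs.
  assert (Exs : xs = X1 + Rabs (f X1) + 1) by reflexivity.
  assert (f xs < 0) by lra.
  specialize (Hpos xs 0). unfold f in H0. lra.
Qed.
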